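(* Assume the Continuum Hypothesis. Let $X$ be a real Banach space with $\operatorname{dens} X = \operatorname{dens} X^* = \omega_1$. Then $X$ contains an overcomplete set which is dense in $X$.
   Context: $\operatorname{dens}$ denotes the density character. A subset $S$ of a Banach space $X$ with $|S| = \operatorname{dens} X$ is called overcomplete if every subset $\Lambda \subseteq S$ with $|\Lambda| = |S|$ is linearly dense in $X$. *)

(* Defs.v *)
From HB Require Import structures.
From mathcomp Require Import all_boot all_order all_algebra.
From mathcomp Require Import all_classical all_reals all_analysis.
Set Implicit Arguments. Unset Strict Implicit. Unset Printing Implicit Defensive.
Import Order.TTheory GRing.Theory Num.Theory.
Import numFieldNormedType.Exports.
Local Open Scope classical_set_scope.
Local Open Scope ring_scope.
Local Open Scope card_scope.

(* |A| = omega_1 : A is uncountable and of minimal uncountable cardinality,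
   i.e. every uncountable subset of A is equipotent to A. *)
Definition card_omega1 (T : Type) (A : set T) : Prop :=
  ~ countable A /\ forall B : set T, B `<=` A -> ~ countable B -> B #= A.

Definition CH (R : realType) : Prop :=
  forall A : set R, countable A \/ A #= [set: R].

(* |A| = dens T : A is equipotent to some dense subset of T and injects into
   every dense subset of T (dens T = least cardinality of a dense subset). *)
Definition card_is_dens (T : topologicalType) (U : Type) (A : set U) : Prop :=
  (exists D : set T, dense D /\ D #= A) /\
  (forall D : set T, dense D -> A #<= D).

Definition dens_omega1 (T : topologicalType) : Prop :=
  exists A : set T, card_is_dens T A /\ card_omega1 A.

Definition is_dual_elt (R : realType) (X : normedModType R) (f : X -> R) : Prop :=
  (forall (a : R) (x y : X), f (a *: x + y) = a * f x + f y) /\ continuous f.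

(* D is norm-dense in X^*: D is a set of elements of X^* and every element of
   X^* is approximated within any eps > 0 in the dual (operator) norm,
   ||f - g|| <= eps  meaning  |f x - g x| <= eps * ||x|| for all x. *)
Definition dual_dense (R : realType) (X : normedModType R) (D : set (X -> R)) : Prop :=
  (forall g, D g -> is_dual_elt g) /\
  forall f : X -> R, is_dual_elt f -> forall eps : R, 0 < eps ->
    exists2 g, D g & forall x : X, `|f x - g x| <= eps * `|x|.

Definition dual_dens_omega1 (R : realType) (X : normedModType R) : Prop :=
  exists D : set (X -> R), dual_dense D /\ card_omega1 D /\
    forall D' : set (X -> R), dual_dense D' -> D #<= D'.

Definition lin_span (R : realType) (X : normedModType R) (S : set X) : set X :=
  [set x | exists (n : nat) (c : 'I_n -> R) (v : 'I_n -> X),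
      (forall i, S (v i)) /\ x = \sum_(i < n) c i *: v i].

Definition lin_dense (R : realType) (X : normedModType R) (S : set X) : Prop :=
  closure (lin_span S) = [set: X].

Definition overcomplete (R : realType) (X : normedModType R) (S : set X) : Prop :=
  card_is_dens X S /\
  forall L : set X, L `<=` S -> L #= S -> lin_dense L.

(* Main.v *)
Require Import Defs.
From HB Require Import structures.
From mathcomp Require Import all_boot all_order all_algebra.
From mathcomp Require Import all_classical all_reals all_analysis.
From mathcomp Require Import ring lra.
Set Implicit Arguments. Unset Strict Implicit. Unset Printing Implicit Defensive.
Import Order.TTheory GRing.Theory Num.Theory.
Import numFieldNormedType.Exports.
Local Open Scope classical_set_scope.
Local Open Scope ring_scope.
Local Open Scope card_scope.

Lemma wo_facts (T : eqType) (W : rel T) : wochoice.well_order W ->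
  [/\ (forall x, W x x), (forall x y, W x y \/ W y x),
      (forall x y, W x y -> W y x -> x = y) &
      (forall N : set T, N !=set0 -> exists m, N m /\ forall y, N y -> W m y)].
Proof.
move=> wo.
have minP (N : set T) : N !=set0 -> exists m, N m /\ forall y, N y -> W m y.
  move=> [x Nx].
  have : wochoice.nonempty (fun y => `[< N y >] : bool).
    by exists x; rewrite unfold_in; apply/asboolP.
  move=> /wo [z [[Nz lbz] _]]; exists z; split.
    by move: Nz; rewrite unfold_in => /asboolP.
  by move=> y Ny; apply: lbz; rewrite unfold_in; apply/asboolP.
have tot x y : W x y \/ W y x.
  have [|m [Nm lbm]] := minP [set z | z = x \/ z = y]; first by exists x; left.
  case: Nm => Em; subst m; [left|right]; apply: lbm; [right|left]; done.
split => //.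
- by move=> x; case: (tot x x).
- move=> x y Wxy Wyx.
  have : wochoice.nonempty (fun z => `[< z = x \/ z = y >] : bool).
    by exists x; rewrite unfold_in; apply/asboolP; left.
  move=> /wo [z [[Nz lbz] uz]].
  have hx : z = x.
    apply: uz; split; first by rewrite unfold_in; apply/asboolP; left.
    move=> w; rewrite unfold_in => /asboolP [->|->] //.
    by case: (tot x x).
  have hy : z = y.
    apply: uz; split; first by rewrite unfold_in; apply/asboolP; right.
    move=> w; rewrite unfold_in => /asboolP [->|->] //.
    by case: (tot y y).
  by rewrite -hx -hy.
Qed.

Lemma inj_le T U (A : set T) (B : set U) (f : T -> U) :
  (forall x, A x -> B (f x)) ->
  (forall x y, A x -> A y -> f x = f y -> x = y) -> A #<= B.
Proof.
move=> fAB finj.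
have : $|{injfun A >-> B}|.
  apply/injfunPex; exists f => // x y /set_mem Ax /set_mem Ay; exact: finj.
by move=> [g]; exact: inj_card_le.
Qed.

Lemma le_fun T (U : pointedType) (A : set T) (B : set U) : A #<= B ->
  exists f : T -> U, (forall x, A x -> B (f x)) /\
     (forall x y, A x -> A y -> f x = f y -> x = y).
Proof.
move=> /pcard_leP /injfunPex [f ff fi]; exists f; split => // x y Ax Ay.
by apply: fi; apply/mem_set.
Qed.

Lemma omega1_embed (T : Type) (W : T -> T -> Prop) (I : set T) (U : Type) (B : set U) :
  (forall x y, W x y \/ W y x) -> (forall x y, W x y -> W y x -> x = y) ->
  (forall N : set T, N !=set0 -> exists m, N m /\ forall y, N y -> W m y) ->
  (forall i, I i -> countable [set y | W y i]) ->
  ~ countable B ->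
  exists h : T -> U, (forall i, I i -> B (h i)) /\
     (forall x y, I x -> I y -> h x = h y -> x = y).
Proof.
move=> tot anti minP cI Bunc.
have [u0 Bu0] : exists u, B u.
  apply: contrapT => nB; apply: Bunc.
  suff -> : B = set0 by exact: countable0.
  by apply/seteqP; split => // u Bu; exfalso; apply: nB; exists u.
pose P := fun G : set (T * U) => [/\ forall p, G p -> I p.1 /\ B p.2,
   forall x a b, G (x,a) -> G (x,b) -> a = b,
   forall x y a, G (x,a) -> G (y,a) -> x = y &
   forall x a y, G (x,a) -> I y -> W y x -> exists b, G (y,b)].
have [M [PM maxM]] : exists M, P M /\ forall G, M `<` G -> ~ P G.
  apply: Zorn_bigcup => F FP Ftot; split.
  - by move=> p [G FG Gp]; have [h _ _ _] := FP G FG; exact: h.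
  - move=> x a b [G1 FG1 G1a] [G2 FG2 G2b]; case: (Ftot G1 G2 FG1 FG2) => sub.
    + by have [_ h _ _] := FP G2 FG2; exact: h (sub _ G1a) G2b.
    + by have [_ h _ _] := FP G1 FG1; exact: h G1a (sub _ G2b).
  - move=> x y a [G1 FG1 G1a] [G2 FG2 G2b]; case: (Ftot G1 G2 FG1 FG2) => sub.
    + by have [_ _ h _] := FP G2 FG2; exact: h (sub _ G1a) G2b.
    + by have [_ _ h _] := FP G1 FG1; exact: h G1a (sub _ G2b).
  - move=> x a y [G FG Gx] Iy Wyx; have [_ _ _ h] := FP G FG.
    by have [b Gb] := h _ _ _ Gx Iy Wyx; exists b; exists G.
have [PM1 PM2 PM3 PM4] := PM.
have dom : forall i, I i -> exists b, M (i,b).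
  move=> i0 Ii0; apply: contrapT => nb.
  pose N := [set i | I i /\ ~ exists b, M (i,b)].
  have [m [[Im nm] minm]] : exists m, N m /\ forall y, N y -> W m y.
    by apply: minP; exists i0.
  have domsub : forall y a, M (y,a) -> W y m.
    move=> y a May; case: (tot y m) => // Wmy; exfalso; apply: nm.
    exact: PM4 _ _ _ May Im Wmy.
  have cM : countable M.
    apply: (sub_countable (B := [set y | W y m])); last exact: cI.
    apply: (inj_le (f := fst)).
    - by move=> [y a] May; exact: domsub May.
    - move=> [y a] [y' a'] Ma Ma' /= eyy'; subst y'.
      by rewrite (PM2 _ _ _ Ma Ma').
  have cim : countable (snd @` M).
    exact: (sub_countable (card_image_le snd M) cM).
  have [b [Bb nb']] : exists b, B b /\ ~ (snd @` M) b.
    apply: contrapT => H; apply: Bunc; apply: sub_countable cim.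
    apply: subset_card_le => b Bb; apply: contrapT => nb'; apply: H.
    by exists b.
  apply: (maxM (M `|` [set (m,b)])).
  - split; first by move=> p; left.
    move=> /(_ (m,b) (or_intror erefl)) Mm; apply: nm; exists b; exact: Mm.
  - split.
    + by move=> p [Mp|->]; [exact: PM1|].
    + move=> x a a' [Ma|[] ex ea] [Ma'|[] ex' ea'].
      * exact: PM2 Ma Ma'.
      * by exfalso; apply: nm; exists a; rewrite -ex'.
      * by exfalso; apply: nm; exists a'; rewrite -ex.
      * by rewrite ea ea'.
    + move=> x y a [Ma|[] ex ea] [Ma'|[] ex' ea'].
      * exact: PM3 Ma Ma'.
      * by exfalso; apply: nb'; exists (x,a) => //; rewrite ea'.
      * by exfalso; apply: nb'; exists (y,a) => //; rewrite ea.
      * by rewrite ex ex'.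
    + move=> x a y [Ma|[] ex ea] Iy Wyx.
      * by have [b' Mb'] := PM4 _ _ _ Ma Iy Wyx; exists b'; left.
      * subst x; case: (pselect (exists b, M (y,b))) => [[b' Mb']|nyb].
          by exists b'; left.
        exists b; right; have Wmy := minm y (conj Iy nyb).
        by rewrite (anti _ _ Wyx Wmy).
have : forall i, exists u, I i -> M (i,u).
  move=> i; case: (pselect (I i)) => Ii.
    by have [u Mu] := dom i Ii; exists u.
  by exists u0.
move=> /choice [h hP]; exists h; split.
  by move=> i Ii; exact: (PM1 _ (hP i Ii)).2.
move=> x y Ix Iy hxy; apply: (PM3 x y (h x)); first exact: hP.
by rewrite hxy; exact: hP.
Qed.

Section Encodings.
Variable R : realType.

Definition e1 (x : R) : nat -> bool :=
  fun k => if @unpickle rat k is Some q then ratr q < x else false.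

Lemma e1_inj : injective e1.
Proof.
have H (x y : R) : x < y -> e1 x = e1 y -> False.
  move=> xy exy; have [q] := rat_in_itvoo xy.
  rewrite in_itv /= => /andP[xq qy].
  have := congr1 (fun f => f (pickle q)) exy; rewrite /e1 pickleK qy.
  by rewrite ltNge (ltW xq).
move=> x y exy; case: (ltgtP x y) => // hxy; exfalso.
- exact: H hxy exy.
- exact: H hxy (esym exy).
Qed.

Definition e2 (s : nat -> nat -> bool) : nat -> bool :=
  fun k => if @unpickle (nat * nat)%type k is Some p then s p.1 p.2 else false.

Lemma e2_inj : injective e2.
Proof.
move=> s t est; apply/funext => n; apply/funext => m.
have := congr1 (fun f => f (pickle (n, m))) est.
by rewrite /e2 pickleK.
Qed.

Definition w3 (i : nat) : R := (3^-1) ^+ i.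
Definition ps (b : nat -> bool) (m : nat) : R := \sum_(i < m) (b i)%:R * w3 i.

Lemma w3_ge0 i : 0 <= w3 i.
Proof. by rewrite /w3 exprn_ge0 // invr_ge0. Qed.

Lemma ps_S b m : ps b m.+1 = ps b m + (b m)%:R * w3 m.
Proof. by rewrite /ps big_ord_recr. Qed.

Lemma ps_mono b m d : ps b m <= ps b (m + d).
Proof.
elim: d => [|d IH]; first by rewrite addn0.
rewrite addnS ps_S; apply: (le_trans IH); rewrite lerDl.
by rewrite mulr_ge0 ?w3_ge0.
Qed.

Lemma ps_tail b k d :
  ps b (k + d) <= ps b k + w3 k * (3/2) * (1 - (3^-1)^+d).
Proof.
elim: d => [|d IH]; first by rewrite addn0 expr0 subrr mulr0 addr0.
rewrite addnS ps_S.
have h1 : (b (k + d))%:R * w3 (k + d) <= w3 k * (3^-1)^+d.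
  rewrite /w3 exprD; apply: ler_piMl.
    by rewrite mulr_ge0 // exprn_ge0 // invr_ge0.
  by case: (b _).
apply: (le_trans (lerD IH h1)).
rewrite exprS -addrA lerD2l le_eqVlt; apply/orP; left; apply/eqP.
by field.
Qed.

Lemma ps_le b m : ps b m <= 3/2.
Proof.
have := ps_tail b 0 m; rewrite add0n /ps big_ord0 add0r /w3 expr0 mul1r.
by move=> h; apply: (le_trans h); rewrite ler_piMr //.
Qed.

Definition e3 (b : nat -> bool) : R := sup (range (ps b)).

Lemma e3_ub b m : ps b m <= e3 b.
Proof.
apply: ub_le_sup; last by exists m.
by exists (3/2) => _ [n _ <-]; exact: ps_le.
Qed.

Lemma e3_le b c : (forall m, ps b m <= c) -> e3 b <= c.
Proof.
move=> h; apply: ge_sup; first by exists (ps b 0), 0%N.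
by move=> _ [n _ <-].
Qed.

Lemma w3_gt0 i : 0 < w3 i.
Proof. by rewrite /w3 exprn_gt0 // invr_gt0. Qed.

Lemma e3_lt b b' k : (forall i, (i < k)%N -> b i = b' i) ->
  b k = true -> b' k = false -> e3 b' < e3 b.
Proof.
move=> same bk b'k.
have psk : ps b k = ps b' k.
  by rewrite /ps; apply: eq_bigr => i _; rewrite same.
have h1 : e3 b' <= ps b' k + w3 k / 2.
  apply: e3_le => m; case: (leqP m k) => mk.
  - have := ps_mono b' m (k - m); rewrite subnKC // => h.
    apply: (le_trans h); rewrite lerDl divr_ge0 ?w3_ge0 //.
  - have := ps_tail b' k.+1 (m - k.+1); rewrite subnKC // ps_S b'k /= mul0r addr0.
    move=> h; apply: (le_trans h); rewrite lerD2l.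
    have -> : w3 k.+1 * (3 / 2) * (1 - 3^-1 ^+ (m - k.+1)) =
              w3 k / 2 * (1 - 3^-1 ^+ (m - k.+1)).
      by rewrite /w3 exprSr; field.
    by rewrite ler_piMr ?divr_ge0 ?w3_ge0 //.
have h2 : ps b k.+1 = ps b' k + w3 k by rewrite ps_S bk psk mul1r.
have h3 := e3_ub b k.+1.
apply: (le_lt_trans h1); apply: (lt_le_trans _ h3); rewrite h2 ltrD2l.
by rewrite ltr_pdivrMr // ltr_pMr ?w3_gt0 // ltr1n.
Qed.

Lemma e3_inj : injective e3.
Proof.
move=> b b' ebb'; apply/funext => n; apply: contrapT => neq.
have ex : exists k, b k != b' k by exists n; apply/eqP.
case: (ex_minnP ex) => k nk mink.
have same : forall i, (i < k)%N -> b i = b' i.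
  move=> i ik; case: (eqVneq (b i) (b' i)) => // /mink.
  by rewrite leqNgt ik.
move: nk; case bk: (b k); case b'k: (b' k) => // _.
- by have := e3_lt same bk b'k; rewrite ebb' ltxx.
- have := @e3_lt b' b k (fun i ik => esym (same i ik)) b'k bk.
  by rewrite ebb' ltxx.
Qed.

Definition E (s : nat -> R) : R := e3 (e2 (fun n => e1 (s n))).

Lemma E_inj : injective E.
Proof.
move=> s t /e3_inj /e2_inj est; apply/funext => n.
by apply: e1_inj; exact: (congr1 (fun f => f n) est).
Qed.

Lemma R_uncountable : ~ countable [set: R].
Proof.
move=> cR.
have : countable [set: nat -> bool].
  apply: (sub_countable _ cR); apply: (inj_le (f := e3)) => // x y _ _.
  exact: e3_inj.
move=> /countable_injP [g ginj].
have : forall n : nat, exists t : nat -> bool,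
    forall s, g s = n -> t = s.
  move=> n; case: (pselect (exists s, g s = n)) => [[s gs]|ns].
    exists s => s' gs'; apply: ginj; rewrite ?in_setE //; by rewrite gs gs'.
  by exists (fun _ => false) => s gs; exfalso; apply: ns; exists s.
move=> /choice [h hP].
pose d := fun n => ~~ h n n.
have := hP (g d) d erefl => hd.
have := congr1 (fun f => f (g d)) hd; rewrite /d /=.
by case: (h (g d) (g d)).
Qed.
End Encodings.

Lemma countableU1 T (A : set T) (m : T) : countable A -> countable (A `|` [set m]).
Proof.
move=> /countable_injP [g ginj]; apply/countable_injP.
exists (fun y => if `[< y = m >] then 0%N else (g y).+1).
move=> x y /set_mem Ax /set_mem Ay.
case: (pselect (x = m)) => [xm|xm]; case: (pselect (y = m)) => [ym|ym].
- by rewrite xm ym.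
- by rewrite (asboolT xm) (asboolF ym).
- by rewrite (asboolF xm) (asboolT ym).
- rewrite (asboolF xm) (asboolF ym) => -[] gxy.
  case: Ax => // Ax; case: Ay => // Ay.
  by apply: ginj => //; apply/mem_set.
Qed.

Lemma omega1_index (R : realType) : CH R -> exists (W : R -> R -> Prop) (I : set R),
  [/\ (forall x y, W x y \/ W y x), (forall x y, W x y -> W y x -> x = y),
      (forall N : set R, N !=set0 -> exists m, N m /\ forall y, N y -> W m y),
      (forall i, I i -> countable [set y | W y i]) & [set: R] #<= I].
Proof.
move=> ch; have [W0 wo] := wochoice.well_ordering_principle R.
have [refl tot anti minP] := wo_facts wo.
pose I := [set x | countable [set y | W0 y x]].
exists (fun x y => W0 x y), I; split => //.
have Iunc : ~ countable I.
  move=> cI.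
  have [m [Im minm]] : exists m, (~` I) m /\ forall y, (~` I) y -> W0 m y.
    apply: minP; apply: contrapT => nI; apply: (@R_uncountable R).
    apply: sub_countable cI; apply: subset_card_le => x _.
    by apply: contrapT => nx; apply: nI; exists x.
  apply: Im; rewrite /I /=.
  apply: (sub_countable (B := I `|` [set m])); last exact: countableU1.
  apply: subset_card_le => y /= Wym.
  case: (pselect (I y)) => [Iy|nIy]; [by left|right].
  exact: anti Wym (minm y nIy).
case: (ch I) => // /card_esym /card_eqPle [] //.
Qed.


Section Lin.
Variables (R : realType) (X : normedModType R).

Definition islin (f : X -> R) := forall (a : R) (x y : X), f (a *: x + y) = a * f x + f y.

Lemma islin0 f : islin f -> f 0 = 0.
Proof.
move=> fl; have := fl 1 0 0; rewrite scale1r addr0 mul1r => h; lra.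
Qed.

Lemma islinN f x : islin f -> f (- x) = - f x.
Proof.
move=> fl; have := fl (-1) x 0; rewrite addr0 islin0 // addr0 scaleN1r.
by rewrite mulN1r.
Qed.

Lemma islinB f x y : islin f -> f (x - y) = f x - f y.
Proof. by move=> fl; rewrite -[x]scale1r fl islinN // mul1r scale1r. Qed.

Lemma lin_bounded_cont (f : X -> R) (k : R) : islin f -> 0 < k ->
  (forall x, `|f x| <= k * `|x|) -> continuous f.
Proof.
move=> fl k0 fb x; apply/cvgrPdist_lt => e e0.
apply/nbhs_ballP; exists (e / k) => /=; first by rewrite divr_gt0.
move=> y; rewrite -ball_normE /= => hy.
rewrite -islinB //; apply: (le_lt_trans (fb _)).
by rewrite -ltr_pdivlMl // mulrC.
Qed.


Lemma span0 (L : set X) : lin_span L 0.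
Proof.
exists 0%N, (fun _ => 0), (fun _ => 0); split; first by case.
by rewrite big_ord0.
Qed.

Lemma span_sub (L : set X) x : L x -> lin_span L x.
Proof.
move=> Lx; exists 1%N, (fun _ => 1), (fun _ => x); split => //.
by rewrite big_ord1 scale1r.
Qed.

Lemma spanD (L : set X) a x y : lin_span L x -> lin_span L y ->
  lin_span L (a *: x + y).
Proof.
move=> [n [c [v [Lv ->]]]] [m [d [u [Lu ->]]]].
exists (n + m)%N.
exists (fun k => match fintype.split k with inl i => a * c i | inr j => d j end).
exists (fun k => match fintype.split k with inl i => v i | inr j => u j end).
split.
  by move=> k; case: (fintype.split k).
rewrite big_split_ord /=.
have sl : forall i : 'I_n, fintype.split (lshift m i) = inl i.
  by move=> i; exact: (unsplitK (inl i)).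
have sr : forall j : 'I_m, fintype.split (rshift n j) = inr j.
  by move=> j; exact: (unsplitK (inr j)).
congr (_ + _).
  rewrite scaler_sumr; apply: eq_bigr => i _; rewrite sl.
  by rewrite scalerA.
by apply: eq_bigr => j _; rewrite sr.
Qed.

End Lin.

Lemma zmod_rearr (V : zmodType) (a b c d : V) : a + b = c + d -> b - d = c - a.
Proof. by move=> e; rewrite -(addKr a b) e addrA addrK addrC. Qed.

Section HB.
Variables (R : realType) (X : normedModType R).
Variable M : set X.
Hypothesis hM0 : M 0.
Hypothesis hMl : forall a x y, M x -> M y -> M (a *: x + y).
Variables (x0 : X) (r : R).
Hypothesis r0 : 0 < r.
Hypothesis hr : forall m, M m -> r <= `|x0 - m|.

Definition goodG (H : set (X * R)) := [/\
  forall x a b, H (x,a) -> H (x,b) -> a = b,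
  forall x a y b l, H (x,a) -> H (y,b) -> H (l *: x + y, l * a + b) &
  forall x a, H (x,a) -> a <= `|x| / r].

Definition G0 : set (X * R) := [set p | exists m t, M m /\ p = (m + t *: x0, t)].

Lemma hM_scale a x : M x -> M (a *: x).
Proof. by move=> Mx; have := hMl a Mx hM0; rewrite addr0. Qed.

Lemma hM_sub x y : M x -> M y -> M (y - x).
Proof. by move=> Mx My; have := hMl (-1) Mx My; rewrite scaleN1r addrC. Qed.

Lemma x0_notin : ~ M x0.
Proof. by move=> /hr; rewrite subrr normr0 leNgt r0. Qed.

Lemma lincomb (a b c : X) (l s t : R) :
  l *: (a + s *: c) + (b + t *: c) = (l *: a + b) + (l * s + t) *: c.
Proof.
by rewrite scalerDr scalerA scalerDl addrACA.
Qed.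

Lemma good_G0 : goodG G0.
Proof.
split.
- move=> x a b [m [t [Mm [ex ea]]]] [m' [t' [Mm' [ex' eb]]]].
  rewrite ea eb; case: (eqVneq t t') => // ntt'; exfalso.
  have e : m + t *: x0 = m' + t' *: x0 by rewrite -ex -ex'.
  have := zmod_rearr e; rewrite -scalerBl => e2.
  apply: x0_notin.
  have -> : x0 = (t - t')^-1 *: (m' - m).
    by rewrite -e2 scalerA mulVf ?scale1r // subr_eq0.
  exact/hM_scale/hM_sub.
- move=> x a y b l [m [t [Mm [-> ->]]]] [m' [t' [Mm' [-> ->]]]].
  exists (l *: m + m'), (l * t + t'); split; first exact: hMl.
  by rewrite lincomb.
- move=> x a [m [t [Mm [-> ->]]]].
  case: (leP t 0) => t0.
    by apply: (le_trans t0); rewrite divr_ge0 // ltW.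
  have := hr (hM_scale (- t^-1) Mm).
  have -> : x0 - (- t^-1) *: m = t^-1 *: (m + t *: x0).
    rewrite scalerDr scalerA mulVf ?gt_eqF // scale1r scaleNr opprK.
    by rewrite addrC.
  rewrite normrZ gtr0_norm ?invr_gt0 // => h.
  rewrite ler_pdivlMr //; rewrite -ler_pdivlMl //.
Qed.

Lemma HB_main : exists f : X -> R,
  [/\ islin f, forall x, f x <= `|x| / r, f x0 = 1 & forall m, M m -> f m = 0].
Proof.
pose P := fun H => goodG (H `|` G0).
have G0_00 : G0 (0, 0).
  by exists 0, 0; split => //; rewrite scale0r addr0.
have [A [PA maxA]] : exists A, P A /\ forall B, A `<` B -> ~ P B.
  apply: Zorn_bigcup => F FP Ftot.
  have two : forall p q, ((\bigcup_(X in F) X) `|` G0) p ->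
      ((\bigcup_(X in F) X) `|` G0) q ->
      exists H, [/\ goodG H, H `<=` ((\bigcup_(X in F) X) `|` G0), H p & H q].
    move=> p q [[G1 FG1 G1p]|G0p] [[G2 FG2 G2q]|G0q].
    - case: (Ftot G1 G2 FG1 FG2) => sub.
      + exists (G2 `|` G0); split; first exact: FP.
        * by move=> z [Gz|Gz]; [left; exists G2|right].
        * by left; exact: sub.
        * by left.
      + exists (G1 `|` G0); split; first exact: FP.
        * by move=> z [Gz|Gz]; [left; exists G1|right].
        * by left.
        * by left; exact: sub.
    - exists (G1 `|` G0); split; first exact: FP.
      * by move=> z [Gz|Gz]; [left; exists G1|right].
      * by left.
      * by right.
    - exists (G2 `|` G0); split; first exact: FP.
      * by move=> z [Gz|Gz]; [left; exists G2|right].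
      * by right.
      * by left.
    - exists G0; split => //; first exact: good_G0.
  split.
  - move=> x a b Ha Hb; have [H [[h _ _] _ Hp Hq]] := two _ _ Ha Hb.
    exact: h Hp Hq.
  - move=> x a y b l Ha Hb; have [H [[_ h _] sub Hp Hq]] := two _ _ Ha Hb.
    exact: sub _ (h _ _ _ _ _ Hp Hq).
  - move=> x a Ha; have [H [[_ _ h] _ Hp _]] := two _ _ Ha Ha.
    exact: h.
pose H := A `|` G0.
have [Hf Hl Hb] : goodG H := PA.
have H00 : H (0,0) by right.
have Hdom : forall z, exists c, H (z,c).
  move=> z; apply: contrapT => nz.
  pose S := [set v | exists y b, H (y,b) /\ v = b - `|y - z| / r].
  have Sub : forall w e, H (w,e) -> forall v, S v -> v <= `|w + z| / r - e.
    move=> w e Hwe _ [y [b [Hyb ->]]].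
    have := Hb _ _ (Hl _ _ _ _ 1 Hyb Hwe); rewrite scale1r mul1r => h.
    have h2 : `|y + w| <= `|y - z| + `|w + z|.
      have -> : y + w = (y - z) + (w + z) by rewrite addrA addrAC subrK.
      exact: ler_normD.
    have h3 : `|y + w| / r <= `|y - z| / r + `|w + z| / r.
      by rewrite -mulrDl ler_pM2r // invr_gt0.
    lra.
  have Shas : has_ubound S by exists (`|0 + z| / r - 0); exact: Sub H00.
  pose c := sup S.
  have cub : forall y b, H (y,b) -> b - `|y - z| / r <= c.
    by move=> y b Hyb; apply: ub_le_sup => //; exists y, b.
  have clb : forall w e, H (w,e) -> c <= `|w + z| / r - e.
    move=> w e Hwe; apply: ge_sup; last exact: Sub Hwe.
    by exists (0 - `|0 - z| / r), 0, 0.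
  pose G' := [set p | exists x a t, H (x,a) /\ p = (x + t *: z, a + t * c)].
  have HG' : H `<=` G'.
    move=> [x a] Hxa; exists x, a, 0; split => //.
    by rewrite scale0r addr0 mul0r addr0.
  have goodG' : goodG G'.
    split.
    - move=> x a b [x1 [a1 [t1 [H1 [ex ea]]]]] [x2 [a2 [t2 [H2 [ex' eb]]]]].
      rewrite ea eb; case: (eqVneq t1 t2) => [et|nt].
      + subst t2; have e12 : x1 = x2 by apply: (addIr (t1 *: z)); rewrite -ex -ex'.
        by subst x2; rewrite (Hf _ _ _ H1 H2).
      + exfalso; apply: nz.
        have e : x1 + t1 *: z = x2 + t2 *: z by rewrite -ex -ex'.
        have := zmod_rearr e; rewrite -scalerBl => e2.
        have Hd : H (x2 - x1, a2 - a1).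
          have := Hl _ _ _ _ (-1) H1 H2; rewrite scaleN1r mulN1r.
          by rewrite (addrC (-x1)) (addrC (-a1)).
        have := Hl _ _ _ _ ((t1 - t2)^-1) Hd H00; rewrite !addr0 -e2 scalerA.
        by rewrite mulVf ?scale1r ?subr_eq0 // => Hz; eexists; exact: Hz.
    - move=> x a y b l [x1 [a1 [t1 [H1 [-> ->]]]]] [x2 [a2 [t2 [H2 [-> ->]]]]].
      exists (l *: x1 + x2), (l * a1 + a2), (l * t1 + t2); split; first exact: Hl.
      by rewrite lincomb; congr (_, _); ring.
    - move=> x a [x1 [a1 [t [H1 [-> ->]]]]].
      case: (ltgtP t 0) => t0.
      + pose s := - t; have s0 : 0 < s by rewrite /s oppr_gt0.
        have ts : t = - s by rewrite /s opprK.
        rewrite ts.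
        have Hs := Hl _ _ _ _ (s^-1) H1 H00; rewrite !addr0 in Hs.
        have := cub _ _ Hs.
        have -> : s^-1 *: x1 - z = s^-1 *: (x1 + - s *: z).
          by rewrite scalerDr scalerA mulrN mulVf ?gt_eqF // scaleN1r.
        rewrite normrZ gtr0_norm ?invr_gt0 // => h.
        have := ler_wpM2l (ltW s0) h; rewrite mulrBr !mulrA mulfV ?gt_eqF // !mul1r.
        by move=> h'; rewrite mulNr; lra.
      + have Hs := Hl _ _ _ _ (t^-1) H1 H00; rewrite !addr0 in Hs.
        have := clb _ _ Hs.
        have -> : t^-1 *: x1 + z = t^-1 *: (x1 + t *: z).
          by rewrite scalerDr scalerA mulVf ?gt_eqF // scale1r.
        rewrite normrZ gtr0_norm ?invr_gt0 // => h.
        have := ler_wpM2l (ltW t0) h; rewrite mulrBr !mulrA mulfV ?gt_eqF // !mul1r.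
        by move=> h'; lra.
      + by subst t; rewrite scale0r mul0r !addr0; exact: Hb H1.
  apply: (maxA G').
  - split; first by move=> p Ap; apply: HG'; left.
    move=> sub.
    have : G' (z, c).
      by exists 0, 0, 1; split => //; rewrite add0r scale1r add0r mul1r.
    by move=> /sub Az; apply: nz; exists c; left.
  - rewrite /P.
    have -> : G' `|` G0 = G'.
      by apply/seteqP; split => p; [case=> // G0p; apply: HG'; right | left].
    exact: goodG'.
have [f fP] := choice Hdom.
exists f; split.
- move=> a x y; apply: (Hf (a *: x + y)); first exact: fP.
  exact: Hl (fP x) (fP y).
- by move=> x; exact: Hb (fP x).
- apply: Hf (fP x0) _; right; exists 0, 1; split => //.
  by rewrite add0r scale1r.
- move=> m Mm; apply: Hf (fP m) _; right; exists m, 0; split => //.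
  by rewrite scale0r addr0.
Qed.
End HB.

Section HBsep.
Variables (R : realType) (X : normedModType R).

Lemma HB_sep (L : set X) : closure (lin_span L) <> setT ->
  exists f : X -> R, [/\ is_dual_elt f, (exists v, f v != 0) & forall l, L l -> f l = 0].
Proof.
move=> ncl.
have [x0 nx0] : exists x0, ~ closure (lin_span L) x0.
  apply: contrapT => H; apply: ncl; apply/seteqP; split => // x _.
  by apply: contrapT => nx; apply: H; exists x.
have [B [nB disj]] : exists B, nbhs x0 B /\ ~ (lin_span L `&` B !=set0).
  apply: contrapT => H; apply: nx0 => B nB; apply: contrapT => nI.
  by apply: H; exists B.
have [r r0 rB] := (nbhs_ballP _ _).1 nB.
have hr : forall m, lin_span L m -> r <= `|x0 - m|.
  move=> m Lm; rewrite leNgt; apply/negP => hm; apply: disj; exists m; split => //.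
  by apply: rB; rewrite -ball_normE.
have [f [fl fb f1 f0]] := HB_main (@span0 _ _ L) (@spanD _ _ L) r0 hr.
exists f; split.
- split => //; apply: (lin_bounded_cont (k := r^-1)) => //; first by rewrite invr_gt0.
  move=> x; rewrite ler_norml; apply/andP; split.
    by rewrite lerNl -islinN // mulrC; apply: (le_trans (fb _)); rewrite normrN.
  by rewrite mulrC; exact: fb.
- by exists x0; rewrite f1 oner_neq0.
- by move=> l Ll; apply: f0; exact: span_sub.
Qed.
End HBsep.

Lemma enum_countable T (C : set T) (c0 : T) : C c0 -> countable C ->
  exists e : nat -> T, (forall n, C (e n)) /\ (forall c, C c -> exists n, e n = c).
Proof.
move=> Cc0 /countable_injP [g ginj].
have : forall n, exists c, C c /\ (forall c', C c' -> g c' = n -> c' = c).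
  move=> n; case: (pselect (exists c', C c' /\ g c' = n)) => [[c' [Cc' gc']]|no].
    exists c'; split => // c'' Cc'' gc''; apply: ginj; rewrite ?in_setE //.
    by rewrite gc' gc''.
  exists c0; split => // c'' Cc'' gc''; exfalso; apply: no; exists c''; done.
move=> /choice [e eP]; exists e; split; first by move=> n; exact: (eP n).1.
by move=> c Cc; exists (g c); apply/esym; exact: (eP (g c)).2 c Cc erefl.
Qed.

Section BaireAvoid.
Variables (R : realType) (X : completeNormedModType R).

Lemma kernel_open (f : X -> R) : continuous f -> open [set x | f x != 0].
Proof.
move=> fc; rewrite openE => x /= fx0.
have := fc x; move/cvgrPdist_lt => /(_ (`|f x|)); rewrite normr_gt0 fx0 => /(_ isT).
apply: filterS => y /= h; apply/eqP => fy0; move: h; rewrite fy0 subr0 ltxx.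
done.
Qed.

Lemma kernel_dense (f : X -> R) : islin f -> (exists v, f v != 0) ->
  dense [set x | f x != 0].
Proof.
move=> fl [v fv] O [y Oy] oO.
case: (eqVneq (f y) 0) => fy; last by exists y.
have nO : nbhs y O := open_nbhs_nbhs (conj oO Oy).
have [e e0 eO] := (nbhs_ballP _ _).1 nO.
pose t := e / (2 * (`|v| + 1)).
have t0 : 0 < t by rewrite divr_gt0 // mulr_gt0 // ltr_wpDl.
exists (t *: v + y); split.
- apply: eO; rewrite -ball_normE /= opprD addrCA subrr addr0 normrN normrZ.
  rewrite gtr0_norm //.
  have h1 : `|v| / (2 * (`|v| + 1)) <= 2^-1.
    rewrite ler_pdivrMr ?mulr_gt0 ?ltr_wpDl // mulrA mulVf // mul1r lerDl //.
  have -> : t * `|v| = e * (`|v| / (2 * (`|v| + 1))) by rewrite /t mulrAC -mulrA.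
  apply: (le_lt_trans (ler_wpM2l (ltW e0) h1)).
  by rewrite ltr_pdivrMr // ltr_pMr // ltr1n.
- by rewrite /= fl fy addr0 mulf_neq0 // gt_eqF.
Qed.

Lemma avoid (C : set (X -> R)) : countable C ->
  (forall f, C f -> is_dual_elt f /\ exists v, f v != 0) ->
  forall a e, 0 < e -> exists x, ball a e x /\ forall f, C f -> f x != 0.
Proof.
move=> cC gC a e e0.
case: (pselect (C !=set0)) => [[c0 Cc0]|nC]; last first.
  exists a; split; first exact: ballxx.
  by move=> f Cf; exfalso; apply: nC; exists f.
have [en [enC ensurj]] := enum_countable Cc0 cC.
have := @Baire R X (fun n => [set x | en n x != 0]).
have H : forall i, open [set x | en i x != 0] /\ dense [set x | en i x != 0].
  move=> n; have [[fl fc] nz] := gC _ (enC n); split.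
    exact: kernel_open.
  exact: kernel_dense.
move=> /(_ H (ball a e)) [].
- by exists a; exact: ballxx.
- exact: ball_open.
move=> x [bx Fx]; exists x; split => // f Cf.
by have [n <-] := ensurj f Cf; exact: Fx n I.
Qed.
End BaireAvoid.

Lemma small0 (R : realType) (d c : R) : 0 <= c ->
  (forall n : nat, `|d| <= 2 * c / n.+1%:R) -> d = 0.
Proof.
move=> c0 h; apply/eqP; rewrite -normr_eq0; apply: contraT => nd.
have dpos : 0 < `|d| by rewrite lt_neqAle eq_sym nd normr_ge0.
have := @archi_boundP R (2 * c / `|d|); rewrite divr_ge0 ?mulr_ge0 //.
move=> /(_ isT); set N := Num.Def.archi_bound _ => hN.
have h1 : 2 * c < N%:R * `|d| by rewrite -ltr_pdivrMr.
have h2 : `|d| * N.+1%:R <= 2 * c by rewrite -ler_pdivlMr ?ltr0Sn // h.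
have h3 : N%:R * `|d| <= N.+1%:R * `|d|.
  by rewrite ler_wpM2r // ler_nat.
rewrite mulrC in h2; lra.
Qed.

Section DualSeq.
Variables (R : realType) (X : normedModType R).

Lemma dual_seq (D : set (X -> R)) : dual_dense D ->
  exists sig : (X -> R) -> nat -> (X -> R),
    (forall f, is_dual_elt f -> forall n, D (sig f n)) /\
    (forall f g, is_dual_elt f -> is_dual_elt g -> sig f = sig g -> f = g).
Proof.
move=> [_ dd].
have : forall f : X -> R, exists s : nat -> (X -> R), is_dual_elt f ->
    forall n, D (s n) /\ forall x, `|f x - s n x| <= n.+1%:R^-1 * `|x|.
  move=> f; case: (pselect (is_dual_elt f)) => hf; last by exists (fun _ _ => 0).
  have : forall n : nat, exists g, D g /\ forall x, `|f x - g x| <= n.+1%:R^-1 * `|x|.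
    move=> n; have np : 0 < n.+1%:R^-1 :> R by rewrite invr_gt0 ltr0Sn.
    by have [g Dg hg] := dd f hf (n.+1%:R^-1) np; exists g.
  by move=> /choice [s sP]; exists s => _ n; exact: sP n.
move=> /choice [sig sigP]; exists sig; split.
  by move=> f hf n; exact: ((sigP f hf) n).1.
move=> f g hf hg efg; apply/funext => x; apply/eqP; rewrite -subr_eq0; apply/eqP.
apply: (@small0 R _ `|x|) => // n.
have h1 := ((sigP f hf) n).2 x; have h2 := ((sigP g hg) n).2 x.
rewrite efg in h1.
have : `|f x - g x| <= `|f x - sig g n x| + `|g x - sig g n x|.
  have -> : f x - g x = (f x - sig g n x) - (g x - sig g n x).
    by rewrite opprB addrA subrK.
  exact: ler_normB.
move=> h3; apply: (le_trans h3).
rewrite mulrAC -mulrA mulr_natl mulr2n; exact: lerD h1 h2.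
Qed.
End DualSeq.


Lemma exists_small (R : realType) (e : R) : 0 < e -> exists n : nat, n.+1%:R^-1 < e.
Proof.
move=> e0; have := @archi_boundP R (e^-1); rewrite invr_ge0 ltW // => /(_ isT).
set N := Num.Def.archi_bound _ => hN; exists N.
rewrite -[_^-1]mul1r ltr_pdivrMr ?ltr0Sn //.
have h1 : 1 < N%:R * e by rewrite -ltr_pdivrMr // mul1r.
have h2 : N%:R * e <= N.+1%:R * e.
  by apply: ler_wpM2r; [exact: ltW | rewrite ler_nat].
rewrite mulrC; lra.
Qed.

Lemma image_uncountable T U (I : set T) (g : T -> U) :
  ~ countable I -> (forall x y, I x -> I y -> g x = g y -> x = y) ->
  ~ countable (g @` I).
Proof.
move=> Iunc ginj cg; apply: Iunc; apply: (sub_countable _ cg).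
by apply: (inj_le (f := g)) => // x Ix; exists x.
Qed.

Theorem theorem4p2 (R : realType) (X : completeNormedModType R) :
  CH R -> dens_omega1 X -> dual_dens_omega1 X ->
  exists S : set X, overcomplete S /\ dense S.
Proof.
move=> ch [A [[[D0 [dD0 eD0]] Amin] [Aunc Aom]]] [D [dd [[Dunc Dom] _]]].
have [W [I [tot anti minP cI RI]]] := omega1_index ch.
have Iunc : ~ countable I.
  by move=> cI'; apply: (@R_uncountable R); exact: sub_countable RI cI'.
have [gA [gAA gAinj]] := omega1_embed tot anti minP cI Aunc.
have [gD [gDD gDinj]] := omega1_embed tot anti minP cI Dunc.
have AI : A #<= I.
  have e : gA @` I #= A.
    apply: Aom; first by move=> _ [i Ii <-]; exact: gAA.
    exact: image_uncountable.
  apply: card_le_trans (card_image_le gA I).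
  by have [] := (card_eqPle _ _).1 e.
have DI : D #<= I.
  have e : gD @` I #= D.
    apply: Dom; first by move=> _ [i Ii <-]; exact: gDD.
    exact: image_uncountable.
  apply: card_le_trans (card_image_le gD I).
  by have [] := (card_eqPle _ _).1 e.
have IA : I #<= A by apply: (inj_le (f := gA)).
have D0I : D0 #<= I.
  by apply: card_le_trans AI; have [] := (card_eqPle _ _).1 eD0.
have [kA [kAI kAinj]] := le_fun D0I.
have [kD [kDI kDinj]] := le_fun DI.
have [rho [rhoI rhoinj]] := le_fun RI.
have [sig [sigD siginj]] := dual_seq dd.
pose good (f : X -> R) := is_dual_elt f /\ exists v, f v != 0.
pose psi (f : X -> R) := rho (E (fun n => kD (sig f n))).
have psiI f : I (psi f) by apply: rhoI.
have psiinj f g : good f -> good g -> psi f = psi g -> f = g.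
  move=> [hf _] [hg _] /rhoinj /= /(_ Logic.I Logic.I) /E_inj e.
  apply: siginj => //; apply/funext => n; apply: kDinj; try exact: sigD.
  exact: (congr1 (fun s => s n) e).
pose jdx (p : X * nat) := rho (E (fun k => if k is 0%N then kA p.1 else p.2%:R)).
have jdxI p : I (jdx p) by apply: rhoI.
have jdxinj p q : D0 p.1 -> D0 q.1 -> jdx p = jdx q -> p = q.
  move=> Ap Aq /rhoinj /= /(_ Logic.I Logic.I) /E_inj e.
  have e0 := congr1 (fun s => s 0%N) e; have e1 := congr1 (fun s => s 1%N) e.
  move: e0 e1 => /= /kAinj -/(_ Ap Aq) e0 /eqP; rewrite eqr_nat => /eqP e1.
  by case: p q Ap Aq e0 e1 {e} => [a n] [a' n'] /= _ _ -> ->.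
pose C (p : X * nat) := [set f | good f /\ W (psi f) (jdx p)].
have cC p : countable (C p).
  apply: (sub_countable _ (cI _ (jdxI p))).
  apply: (inj_le (f := psi)); first by move=> f [].
  by move=> f g [gf _] [gg _]; exact: psiinj.
have : forall p : X * nat, exists x, ball p.1 (p.2.+1%:R^-1) x /\
    forall f, C p f -> f x != 0.
  move=> p; apply: avoid; [exact: cC | by move=> f [] | by rewrite invr_gt0 ltr0Sn].
move=> /choice [xf xfP].
pose S := xf @` (D0 `*` setT).
have Sd : dense S.
  move=> O [y Oy] oO.
  have [e e0 eO] := (nbhs_ballP _ _).1 (open_nbhs_nbhs (conj oO Oy)).
  have e20 : 0 < e / 2 by rewrite divr_gt0.
  have := dD0 (ball y (e / 2)); case.
  - by exists y; exact: ballxx.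
  - exact: ball_open.
  move=> a [ba D0a].
  have [n hn] := exists_small e20.
  have [bx _] := xfP (a, n).
  exists (xf (a, n)); split; last by exists (a, n).
  apply: eO; rewrite -ball_normE /=; rewrite -ball_normE /= in ba bx.
  have := ler_normD (y - a) (a - xf (a, n)); rewrite addrA subrK => h.
  apply: (le_lt_trans h); rewrite [X in _ < X](splitr e).
  exact: ltrD ba (lt_trans bx hn).
have SA : S #<= A.
  apply: (card_le_trans (card_image_le xf _)).
  apply: (card_le_trans (B := I)); last exact: IA.
  apply: (inj_le (f := jdx)) => // p q [Dp _] [Dq _]; exact: jdxinj.
have Zc : forall f, good f -> countable (S `&` [set x | f x = 0]).
  move=> f gf.
  have sub : S `&` [set x | f x = 0] `<=`
      xf @` [set p | (D0 `*` setT) p /\ W (jdx p) (psi f)].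
    move=> _ [[p Dp <-] /= fz]; exists p => //; split => //.
    case: (tot (jdx p) (psi f)) => // Wpj; exfalso.
    by have := (xfP p).2 f (conj gf Wpj); rewrite fz eqxx.
  apply: (sub_countable (subset_card_le sub)).
  apply: (sub_countable (card_image_le _ _)).
  apply: (sub_countable _ (cI _ (psiI f))).
  apply: (inj_le (f := jdx)); first by move=> p [].
  by move=> p q [[Dp _] _] [[Dq _] _]; exact: jdxinj.
have Sunc : ~ countable S.
  by move=> cS; apply: Aunc; exact: sub_countable (Amin S Sd) cS.
exists S; split => //; split.
- split; first by exists S; split => //; exact: card_eqxx.
  by move=> D' dD'; exact: card_le_trans SA (Amin D' dD').
- move=> L LS LeS; apply: contrapT => nld.
  have [f [hf nz fL]] := HB_sep nld.
  apply: Sunc; rewrite -(eq_countable LeS).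
  apply: (sub_countable (subset_card_le (B := S `&` [set x | f x = 0]) _)).
    by move=> l Ll; split; [exact: LS | exact: fL].
  exact: Zc.
Qed.
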